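(* Let $F$ be a euclidean field, $B=F[\![X]\!]$, and $f\in B\setminus\{0\}$. Then $$\operatorname{PO}(f)=\begin{cases}\Phi(F^2,0)\cup\Phi(\epsilon(f)F^2,\mathrm{val}(f)) & \text{if } \mathrm{val}(f)\text{ is odd},\\ \Phi(F^2,0) & \text{if } \mathrm{val}(f)\text{ is even and }\epsilon(f)=1,\\ \Phi(F^2,0)\cup\Phi(F,\mathrm{val}(f))\cup\Phi(F,\mathrm{val}(f)+1) & \text{otherwise.}\end{cases}$$ In particular, $\operatorname{PO}(f)=\operatorname{PO}(1)$ if $\mathrm{val}(f)$ is even and $\epsilon(f)=1$, and $\operatorname{PO}(f)=\operatorname{PO}(\epsilon(f)X^{\mathrm{val}(f)})$ otherwise.
   Context: A euclidean field is a formally real field $F$ with $F=F^2\cup(-F^2)$, where $F^2=\{c^2:c\in F\}$; for $c\in F\setminus\{0\}$ its sign is $1$ if $c\in F^2$ and $-1$ if $-c\in F^2$; for $\epsilon\in\{\pm1\}$, $\epsilon F^2=\{\epsilon c^2: c\in F\}$. Let $B=F[\![X]\!]$, and for nonzero $f=\sum_{i\ge n}a_iX^i\in B$ with $a_n\ne0$ let $\mathrm{val}(f)=n$ (the order of $f$) and $\mathrm{an}(f)=a_n$ (its leading coefficient); $\epsilon(f)$ is the sign of $\mathrm{an}(f)$. For a subset $M\subseteq F$ (a quasi-quadratic module of $F$) and an integer $n\ge0$, $$\Phi(M,n)=\{x\in B\setminus\{0\}:\ \mathrm{val}(x)\equiv n \pmod 2,\ \mathrm{val}(x)\ge n,\ \mathrm{an}(x)\in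 M\}\cup\{0\}.$$ For $g\in B$, $\operatorname{PO}(g)=\{\sigma_0+\sigma_1g:\ \sigma_0,\sigma_1\in\sum B^2\}$ is the monogenic quadratic module (preordering) generated by $g$, where $\sum B^2$ is the set of finite sums of squares in $B$. *)

(* Defs.v *)
(* Formal power series F[[X]] are represented as coefficient
   sequences nat -> F, with Cauchy product. *)
From mathcomp Require Import all_boot all_order all_algebra.
Set Implicit Arguments. Unset Strict Implicit. Unset Printing Implicit Defensive.
Import Order.TTheory GRing.Theory.
Local Open Scope ring_scope.

Section Defs.
Variable F : fieldType.

Definition formally_real : Prop :=
  forall s : seq F, \sum_(x <- s) x ^+ 2 = 0 -> all (fun x => x == 0) s.

Definition is_square (c : F) : Prop := exists d : F, c = d ^+ 2.

Definition euclidean_field : Prop :=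
  formally_real /\ forall c : F, is_square c \/ is_square (- c).

Definition is_sign (c eps : F) : Prop :=
  (eps = 1 /\ is_square c) \/ (eps = -1 /\ is_square (- c)).

Definition epsF2 (eps : F) (a : F) : Prop := exists c : F, a = eps * c ^+ 2.

Definition pser := nat -> F.

Definition pser_mul (a b : pser) : pser :=
  fun n => \sum_(i < n.+1) a i * b (n - i)%N.

Definition pser_one : pser := fun n => if n == 0%N then 1 else 0.

Definition pser_monomial (eps : F) (v : nat) : pser :=
  fun n => if n == v then eps else 0.

Definition is_val (f : pser) (n : nat) : Prop :=
  f n != 0 /\ forall i, (i < n)%N -> f i = 0.

Definition sos (s : pser) : Prop :=
  exists l : seq pser, forall n, s n = \sum_(h <- l) pser_mul h h n.

Definition PO (g : pser) (x : pser) : Prop :=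
  exists s0 s1 : pser, sos s0 /\ sos s1 /\
    forall n, x n = s0 n + pser_mul s1 g n.

Definition Phi (M : F -> Prop) (n : nat) (x : pser) : Prop :=
  (forall i, x i = 0) \/
  exists m, is_val x m /\ odd m = odd n /\ (n <= m)%N /\ M (x m).

End Defs.

(* Main.v *)
From HB Require Import structures.
Require Import Defs.
From mathcomp Require Import all_boot all_order all_algebra.
From mathcomp Require Import boolp.
From mathcomp Require Import ring zify.
From Stdlib Require Import FunctionalExtensionality.
Set Implicit Arguments. Unset Strict Implicit. Unset Printing Implicit Defensive.
Import Order.TTheory GRing.Theory.
Local Open Scope ring_scope.

Section PS.
Variable F : fieldType.

Record ps := Ps { coef : nat -> F }.

Lemma ps_ext (a b : ps) : (forall n, coef a n = coef b n) -> a = b.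
Proof. by case: a; case: b => b a H; congr Ps; apply: functional_extensionality. Qed.

HB.instance Definition _ := gen_eqMixin ps.
HB.instance Definition _ := gen_choiceMixin ps.

Definition ps0 := Ps (fun _ => 0).
Definition psadd a b := Ps (fun n => coef a n + coef b n).
Definition psopp a := Ps (fun n => - coef a n).

Lemma psaddA : associative psadd.
Proof. by move=> a b c; apply: ps_ext => n /=; rewrite addrA. Qed.
Lemma psaddC : commutative psadd.
Proof. by move=> a b; apply: ps_ext => n /=; rewrite addrC. Qed.
Lemma psadd0 : left_id ps0 psadd.
Proof. by move=> a; apply: ps_ext => n /=; rewrite add0r. Qed.
Lemma psaddN : left_inverse ps0 psopp psadd.
Proof. by move=> a; apply: ps_ext => n /=; rewrite addNr. Qed.

HB.instance Definition _ := GRing.isZmodule.Build ps psaddA psaddC psadd0 psaddN.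

Definition tr (N : nat) (a : ps) : {poly F} := \poly_(i < N.+1) coef a i.

Definition psmul a b := Ps (pser_mul (coef a) (coef b)).
Definition ps1 := Ps (pser_one F).

Lemma mul_tr a b N n : (n <= N)%N ->
  pser_mul (coef a) (coef b) n = (tr N a * tr N b)`_n.
Proof.
move=> nN; rewrite coefM /pser_mul; apply: eq_bigr => i _.
have h1 : (i < N.+1)%N by rewrite ltnS (leq_trans _ nN) // -ltnS.
have h2 : (n - i < N.+1)%N by rewrite ltnS (leq_trans (leq_subr _ _) nN).
by rewrite !coef_poly h1 h2.
Qed.

Lemma coef_tr N a i : (i <= N)%N -> (tr N a)`_i = coef a i.
Proof. by move=> h; rewrite coef_poly ltnS h. Qed.

Lemma psmulA : associative psmul.
Proof.
move=> a b c; apply: ps_ext => n /=; symmetry.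
transitivity ((tr n a * tr n b * tr n c)`_n).
  rewrite coefM /pser_mul; apply: eq_bigr => i _.
  have hi : (i <= n)%N by rewrite -ltnS.
  rewrite (coef_tr c) ?leq_subr //. rewrite -(mul_tr _ _ hi) //.
transitivity ((tr n a * (tr n b * tr n c))`_n); first by rewrite mulrA.
rewrite coefM /pser_mul; apply: eq_bigr => i _.
have hi : (i <= n)%N by rewrite -ltnS.
rewrite (coef_tr a) // -(mul_tr _ _ (leq_subr i n)) //.
Qed.

Lemma psmulC : commutative psmul.
Proof. by move=> a b; apply: ps_ext => n /=; rewrite !(mul_tr _ _ (leqnn n)) mulrC. Qed.

Lemma psmul1 : left_id ps1 psmul.
Proof.
move=> a; apply: ps_ext => n /=; rewrite /pser_mul big_ord_recl /= /pser_one /= mul1r subn0.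
by rewrite big1 ?addr0 // => i _; rewrite mul0r.
Qed.

Lemma psmulD : left_distributive psmul psadd.
Proof.
by move=> a b c; apply: ps_ext => n /=; rewrite /pser_mul -big_split; apply: eq_bigr => i _; rewrite mulrDl.
Qed.

Lemma ps1_neq0 : ps1 != 0.
Proof.
apply/eqP => /(congr1 (fun a => coef a 0%N)) /=; rewrite /pser_one /=.
by move/eqP; rewrite oner_eq0.
Qed.

HB.instance Definition _ := GRing.Zmodule_isComNzRing.Build ps psmulA psmulC psmul1 psmulD ps1_neq0.

Lemma coefD a b n : coef (a + b) n = coef a n + coef b n. Proof. by []. Qed.
Lemma coefN a n : coef (- a) n = - coef a n. Proof. by []. Qed.
Lemma coef0 n : coef 0 n = 0. Proof. by []. Qed.
Lemma coefM' a b n : coef (a * b) n = pser_mul (coef a) (coef b) n. Proof. by []. Qed.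


Lemma coef_sum (I : Type) (l : seq I) (G : I -> ps) n :
  coef (\sum_(h <- l) G h) n = \sum_(h <- l) coef (G h) n.
Proof. by elim: l => [|y l IH]; rewrite ?big_nil ?big_cons // coefD IH. Qed.

Lemma ps0P a : (forall i, coef a i = 0) <-> a = 0.
Proof. by split => [H|-> //]; apply: ps_ext. Qed.

Definition isv (a : ps) m := is_val (coef a) m.

Lemma zero_or_val a : a = 0 \/ exists m, isv a m.
Proof.
case: (EM (exists i, coef a i != 0)) => [H|H]; last first.
  left; apply/ps0P => i; apply/eqP; apply/negPn/negP => Hi; apply: H; by exists i.
right; exists (ex_minn H); case: ex_minnP => m Hm Hmin; split => // i Hi.
apply/eqP; apply/negPn/negP => Hi'; move: (Hmin _ Hi'); by rewrite leqNgt Hi.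
Qed.

Lemma isv_uniq a m m' : isv a m -> isv a m' -> m = m'.
Proof.
move=> [H1 H2] [H1' H2']; case: (ltngtP m m') => h.
- by move: H1; rewrite H2' ?eqxx.
- by move: H1'; rewrite H2 ?eqxx.
- by [].
Qed.

Lemma low_mul a b p q : (forall i, (i < p)%N -> coef a i = 0) ->
  (forall i, (i < q)%N -> coef b i = 0) -> forall k, (k < p + q)%N -> coef (a * b) k = 0.
Proof.
move=> Ha Hb k Hk; rewrite coefM' /pser_mul big1 // => i _.
case: (ltnP i p) => hi; first by rewrite Ha ?mul0r.
rewrite Hb ?mulr0 //; rewrite ltn_subLR; last by rewrite -ltnS.
lia.
Qed.

Lemma val_mul a b p q : isv a p -> isv b q ->
  isv (a * b) (p + q) /\ coef (a * b) (p + q) = coef a p * coef b q.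
Proof.
move=> [Ha0 Ha] [Hb0 Hb].
have E : coef (a * b) (p + q) = coef a p * coef b q.
  rewrite coefM' /pser_mul.
  have hp : (p < (p + q).+1)%N by rewrite ltnS leq_addr.
  rewrite (bigD1 (Ordinal hp)) //= addKn big1 ?addr0 // => i /eqP Hi.
  case: (ltngtP i p) => h.
  - by rewrite Ha ?mul0r.
  - rewrite Hb ?mulr0 //; rewrite ltn_subLR; last by rewrite -ltnS.
    by rewrite ltn_add2r.
  - by case: Hi; apply: val_inj.
split => //; split; first by rewrite E mulf_neq0.
by apply: low_mul.
Qed.

Lemma val_add_lt a b p : isv a p -> (forall i, (i <= p)%N -> coef b i = 0) ->
  isv (a + b) p /\ coef (a + b) p = coef a p.
Proof.
move=> [Ha0 Ha] Hb; have E : coef (a + b) p = coef a p by rewrite coefD Hb ?addr0.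
split => //; split; first by rewrite E.
by move=> i hi; rewrite coefD Ha // Hb ?addr0 // ltnW.
Qed.


Section Rec.
Variable step : nat -> (nat -> F) -> F.
Fixpoint aux n : seq F := match n with 0 => [::] | k.+1 => rcons (aux k) (step k (fun i => nth 0 (aux k) i)) end.
Lemma size_aux n : size (aux n) = n.
Proof. by elim: n => //= n IH; rewrite size_rcons IH. Qed.
Lemma nth_aux n i : (i < n)%N -> nth 0 (aux n) i = nth 0 (aux i.+1) i.
Proof.
elim: n => // n IH hi; rewrite /= nth_rcons size_aux.
case: (ltngtP i n) => h; first by rewrite IH.
- by move: hi; rewrite ltnS leqNgt h.
- by rewrite h /= nth_rcons size_aux ltnn eqxx.
Qed.
End Rec.

Lemma rec_exists (step : nat -> (nat -> F) -> F) :
  (forall n g1 g2, (forall i, (i < n)%N -> g1 i = g2 i) -> step n g1 = step n g2) ->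
  exists g : nat -> F, forall n, g n = step n g.
Proof.
move=> Hs; exists (fun n => nth 0 (aux step n.+1) n) => n.
rewrite /= nth_rcons size_aux ltnn eqxx; apply: Hs => i hi; exact: nth_aux.
Qed.

Lemma big_mid (G : nat -> F) n N : (n <= N)%N -> (forall i, (n < i)%N -> (i <= N)%N -> G i = 0) ->
  \sum_(i < N.+1) G i = \sum_(i < n.+1) G i.
Proof.
move=> hn HG; rewrite -!(big_mkord xpredT) (big_cat_nat _ (n := n.+1)) //=. all: try (by rewrite ltnS).
suff -> : \sum_(n.+1 <= i < N.+1) G i = 0 by rewrite addr0.
rewrite big_nat_cond big1 // => i /andP [/andP [h1 h2] _]; apply: HG => //.
Qed.

Lemma div_ex (g x : ps) v : isv g v -> (forall i, (i < v)%N -> coef x i = 0) ->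
  exists q, x = q * g.
Proof.
move=> [Hg0 Hg] Hx.
pose step n (q : nat -> F) := (coef x (v + n) - \sum_(i < n) q i * coef g (v + n - i)) / coef g v.
have [q Hq] : exists q : nat -> F, forall n, q n = step n q.
  apply: rec_exists => n g1 g2 H; rewrite /step; congr ((_ - _) / _).
  by apply: eq_bigr => i _; rewrite H.
exists (Ps q); apply: ps_ext => k; rewrite coefM' /=.
case: (ltnP k v) => hk.
  rewrite Hx // /pser_mul big1 // => i _; rewrite Hg ?mulr0 //.
  by apply: leq_ltn_trans hk; apply: leq_subr.
have -> : k = (v + (k - v))%N by rewrite subnKC.
move: (k - v)%N => n; rewrite /pser_mul (big_mid (G := fun i => q i * coef g (v + n - i)) (n := n)) ?leq_addl //; last first.
  by move=> i h1 h2; rewrite Hg ?mulr0 //; lia.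
rewrite big_ord_recr /= Hq /step addnK.
rewrite -mulrA mulVf // mulr1 addrC subrK //.
Qed.

Lemma sqrt_ex (q : ps) c : (2%:R : F) != 0 -> c != 0 -> coef q 0 = c ^+ 2 -> exists h, q = h * h.
Proof.
move=> H2 Hc Hq0.
pose step n (h : nat -> F) := if n == 0%N then c else
  (coef q n - \sum_(i < n.-1) h i.+1 * h (n - i.+1)%N) / (2%:R * c).
have [h Hh] : exists h : nat -> F, forall n, h n = step n h.
  apply: rec_exists => n g1 g2 H; rewrite /step; case: n H => // n H; congr ((_ - _) / _).
  apply: eq_bigr => i _; move: (ltn_ord i) => /= hi; rewrite !H //=; lia.
exists (Ps h); apply: ps_ext => n; rewrite coefM' /pser_mul /=.
case: n => [|k]; first by rewrite big_ord1 Hh /= Hq0 expr2.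
rewrite big_ord_recl big_ord_recr /= subn0 subnn.
set S := \sum_(i < k) _.
have -> : S = \sum_(i < k) h i.+1 * h (k.+1 - i.+1)%N.
  by apply: eq_bigr.
rewrite [h k.+1]Hh [h 0%N]Hh /step /=.
have Hc2 : 2%:R * c != 0 by rewrite mulf_neq0.
set T := \sum_(i < k) _.
set u := coef q k.+1.
field; by rewrite Hc H2.
Qed.


Section Main.
Hypothesis HF : euclidean_field F.

Lemma fr2 (c d : F) : c ^+ 2 + d ^+ 2 = 0 -> c = 0.
Proof.
case: HF => HR _ H; have := HR [:: c; d]; rewrite !big_cons big_nil addr0 => /(_ H) /=.
by case/andP => /eqP.
Qed.

Lemma fr3 (c d e : F) : c ^+ 2 + d ^+ 2 + e ^+ 2 = 0 -> c = 0.
Proof.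
case: HF => HR _ H; have := HR [:: c; d; e]; rewrite !big_cons big_nil addr0 addrA => /(_ H) /=.
by case/andP => /eqP.
Qed.

Lemma natr_neq0 k : (k.+1%:R : F) != 0.
Proof.
case: HF => HR _; apply/eqP => H.
have E : forall n, \sum_(x <- nseq n (1:F)) x ^+ 2 = n%:R.
  by elim=> [|n IH]; rewrite ?big_nil // big_cons IH expr1n mulrS.
have := HR (nseq k.+1 1); rewrite E H => /(_ erefl) /=; by rewrite oner_eq0.
Qed.

Lemma neg1_neq1 : (-1 : F) != 1.
Proof.
apply/eqP => H; have h := natr_neq0 1.
by rewrite mulr2n -{1}H addNr eqxx in h.
Qed.

Lemma sq_add (x y : F) : is_square x -> is_square y -> x != 0 -> x + y != 0 /\ is_square (x + y).
Proof.
move=> [c ->] [d ->] Hx; split.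
  apply/eqP => H0; have Hc := fr2 H0; by rewrite Hc expr2 mulr0 eqxx in Hx.
case: HF => _ /(_ (c ^+ 2 + d ^+ 2)) [//|[e He]].
have : c ^+ 2 + d ^+ 2 + e ^+ 2 = 0 by rewrite -He addrN.
by move/fr3 => Hc; rewrite Hc expr2 mulr0 eqxx in Hx.
Qed.

Lemma sign_dec (c eps : F) : c != 0 -> is_sign c eps ->
  (eps = 1 \/ eps = -1) /\ exists d, d != 0 /\ c = eps * d ^+ 2.
Proof.
move=> Hc [[-> [d Hd]]|[-> [d Hd]]]; split; [by left| |by right|].
  exists d; rewrite mul1r; split => //; apply/eqP => Hd0; by rewrite Hd Hd0 expr0n eqxx in Hc.
exists d; split.
  apply/eqP => Hd0; move: Hc; by rewrite -[c]opprK Hd Hd0 expr0n oppr0 eqxx.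
by rewrite mulN1r -Hd opprK.
Qed.

Definition PhiP (M : F -> Prop) n (a : ps) := Phi M n (coef a).
Definition sosP (a : ps) := exists l : seq ps, a = \sum_(h <- l) h * h.

Lemma PhiP0 M n : PhiP M n 0.
Proof. by left. Qed.

Lemma sq_mul_Phi h : PhiP (@is_square F) 0 (h * h).
Proof.
case: (zero_or_val h) => [->|[m Hm]]; first by rewrite mul0r; left.
have [V E] := val_mul Hm Hm; right; exists (m + m)%N; split => //; split.
  by rewrite addnn odd_double.
by split => //; exists (coef h m); rewrite E expr2.
Qed.

Lemma Phi_add a b : PhiP (@is_square F) 0 a -> PhiP (@is_square F) 0 b -> PhiP (@is_square F) 0 (a + b).
Proof.
move=> [/ps0P ->|[p [Ha [Hpo [_ Hps]]]]]; first by rewrite add0r.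
move=> [/ps0P ->|[q [Hb [Hqo [_ Hqs]]]]]; first by rewrite addr0; right; exists p.
case: (ltngtP p q) => h.
- have [V E] := val_add_lt Ha (fun i hi => proj2 Hb i (leq_ltn_trans hi h)).
  by right; exists p; rewrite /isv in V; rewrite E.
- have [V E] := val_add_lt Hb (fun i hi => proj2 Ha i (leq_ltn_trans hi h)).
  rewrite addrC in V E; by right; exists q; rewrite E.
- subst q; have [N S] := sq_add Hps Hqs (proj1 Ha).
  right; exists p; split => //; split => //.
  by move=> i hi; rewrite coefD (proj2 Ha) // (proj2 Hb) // addr0.
Qed.

Lemma sosP_Phi a : sosP a -> PhiP (@is_square F) 0 a.
Proof.
move=> [l ->]; elim: l => [|h l IH]; first by rewrite big_nil; left.
by rewrite big_cons; apply: Phi_add => //; apply: sq_mul_Phi.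
Qed.

Definition xk k := Ps (fun n => if n == k then (1 : F) else 0).
Lemma isv_xk k : isv (xk k) k /\ coef (xk k) k = 1.
Proof.
rewrite /isv /is_val /= eqxx; split => //; split; first exact: oner_neq0.
by move=> i hi; rewrite ifF //; apply/negbTE; rewrite neq_ltn hi.
Qed.

Lemma sq_of_Phi a : PhiP (@is_square F) 0 a -> exists h, a = h * h.
Proof.
move=> [/ps0P ->|[m [Ha [Hmo [_ [d Hd]]]]]]; first by exists 0; rewrite mul0r.
have Hm : m = (m./2 + m./2)%N by rewrite addnn -[in LHS](odd_double_half m) Hmo.
set k := m./2 in Hm; have [Vk Ek] := isv_xk k.
have [Vg Eg] := val_mul Vk Vk; rewrite Ek mulr1 in Eg.
have [q Hq] := div_ex Vg (fun i hi => proj2 Ha i ltac:(by rewrite Hm)).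
case: (zero_or_val q) => [Hq0|[r Hr]].
  by move: (proj1 Ha); rewrite Hq Hq0 mul0r eqxx.
have [V E] := val_mul Hr Vg; rewrite -Hq in V E.
have Er : r = 0%N by move: (isv_uniq V Ha); rewrite Hm; lia.
subst r; rewrite Eg mulr1 add0n -Hm Hd in E.
have Hd0 : d != 0 by apply/eqP => h0; move: (proj1 Ha); rewrite Hd h0 expr0n eqxx.
have [h Hh] := sqrt_ex (natr_neq0 1) Hd0 (esym E).
exists (h * xk k); rewrite Hq Hh; ring.
Qed.

Lemma Phi_sosP a : PhiP (@is_square F) 0 a -> sosP a.
Proof. by move/sq_of_Phi => [h ->]; exists [:: h]; rewrite big_seq1. Qed.


Definition RHS v (eps : F) (x : pser F) : Prop :=
  if odd v then Phi (@is_square F) 0 x \/ Phi (epsF2 eps) v x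
      else if eps == 1 then Phi (@is_square F) 0 x
      else Phi (@is_square F) 0 x \/ Phi (fun _ => True) v x
           \/ Phi (fun _ => True) v.+1 x.

Lemma sosP0 : sosP 0.
Proof. by exists [::]; rewrite big_nil. Qed.

Lemma sosP_sq h : sosP (h * h).
Proof. by exists [:: h]; rewrite big_seq1. Qed.

Lemma part1 (f : ps) v eps : isv f v -> is_sign (coef f v) eps -> forall x : ps,
  (exists s0 s1, sosP s0 /\ sosP s1 /\ x = s0 + s1 * f) <-> RHS v eps (coef x).
Proof.
move=> Hf Hs x; have [Heps [d [Hd Hfd]]] := sign_dec (proj1 Hf) Hs.
have low : forall s1 i, (i < v)%N -> coef (s1 * f) i = 0.
  by move=> s1 i hi; apply: (low_mul (p := 0)) (proj2 Hf) _ _ => //.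
have S1F : forall s1, sosP s1 -> s1 * f = 0 \/ exists m c, ~~ odd m /\ isv (s1 * f) (m + v) /\
    coef (s1 * f) (m + v) = eps * c ^+ 2.
  move=> s1 /sosP_Phi [/ps0P ->|[m [Hm [Hmo [_ [c Hc]]]]]]; first by left; rewrite mul0r.
  right; have [V E] := val_mul Hm Hf; exists m, (c * d); split; first by rewrite Hmo.
  by split => //; rewrite E Hc Hfd; ring.
have eps0 : eps != 0 by case: Heps => ->; rewrite ?oppr_eq0 oner_neq0.
split.
- move=> [s0 [s1 [H0 [H1 ->]]]]; have P0 := sosP_Phi H0.
  rewrite /RHS; case: ifP => Hvo.
  + case: (S1F s1 H1) => [->|[m [c [Hm [V E]]]]]; first by rewrite addr0; left.
    have Hmv : odd (m + v) = odd v by rewrite oddD (negbTE Hm).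
    case: P0 => [/ps0P ->|[p [Hp [Hpo [_ Hps]]]]].
      right; right; exists (m + v)%N; rewrite add0r; split => //; split => //.
      by split; [rewrite leq_addl | exists c].
    case: (ltngtP p (m + v)) => h.
    * have [V' E'] := val_add_lt Hp (fun i hi => proj2 V i (leq_ltn_trans hi h)).
      by left; right; exists p; rewrite E'.
    * have [V' E'] := val_add_lt V (fun i hi => proj2 Hp i (leq_ltn_trans hi h)).
      rewrite addrC in V' E'; right; right; exists (m + v)%N; rewrite E'; split => //; split => //.
      by split; [rewrite leq_addl | exists c].
    * by move: Hpo; rewrite h Hmv Hvo.
  + case: ifP => He.
    * move/eqP: He => He; apply: Phi_add => //.
      case: (S1F s1 H1) => [->|[m [c [Hm [V E]]]]]; first by left.
      right; exists (m + v)%N; split => //; split; first by rewrite oddD (negbTE Hm) Hvo.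
      by split => //; exists c; rewrite E He mul1r.
    * case: (zero_or_val (s0 + s1 * f)) => [->|[n Hn]]; first by left; left.
      case: (leqP v n) => hvn.
        right; case Hon : (odd n == odd v).
          by left; right; exists n; split => //; split => //; apply/eqP.
        right; right; exists n; split => //; split; first by move: Hon; rewrite /=; case: (odd n); case: (odd v).
        split => //; rewrite ltn_neqAle hvn andbT; apply/eqP => h; by rewrite h eqxx in Hon.
      have Ex : forall i, (i < v)%N -> coef (s0 + s1 * f) i = coef s0 i.
        by move=> i hi; rewrite coefD low // addr0.
      case: P0 => [/ps0P H00|[p [Hp [Hpo [_ Hps]]]]].
        by move: (proj1 Hn); rewrite Ex // H00 eqxx.
      have Hs0n : isv s0 n.
        split; first by rewrite -Ex // (proj1 Hn).
        by move=> i hi; rewrite -Ex ?(proj2 Hn) //; apply: ltn_trans hvn.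
      have Epn := isv_uniq Hp Hs0n; subst p.
      left; right; exists n; split => //; split => //; split => //; by rewrite Ex.
- rewrite /RHS.
  have fromsq : PhiP (@is_square F) 0 x -> exists s0 s1, sosP s0 /\ sosP s1 /\ x = s0 + s1 * f.
    move=> Hx; exists x, 0; split; first exact: Phi_sosP.
    by split; [exact: sosP0 | rewrite mul0r addr0].
  case: ifP => Hvo.
  + case => [|Hx]; first exact: fromsq.
    case: Hx => [/ps0P ->|[m [Hm [Hmo [Hvm [c Hc]]]]]].
      by exists 0, 0; split; [exact: sosP0|split; [exact: sosP0|rewrite mul0r addr0]].
    have [q Hq] := div_ex Hf (fun i hi => proj2 Hm i (leq_trans hi Hvm)).
    case: (zero_or_val q) => [Hq0|[r Hr]].
      by move: (proj1 Hm); rewrite Hq Hq0 mul0r eqxx.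
    have [V E] := val_mul Hr Hf; rewrite -Hq in V E.
    have Erm := isv_uniq V Hm; rewrite -Erm in E Hmo.
    have Hqsq : PhiP (@is_square F) 0 q.
      right; exists r; split => //; split.
        by move: Hmo; rewrite oddD Hvo; case: (odd r).
      split => //; exists (c / d).
      have Hed : eps * d ^+ 2 != 0 by rewrite mulf_neq0 // expf_neq0.
      rewrite -(mulfK Hed (coef q r)) -Hfd -E Erm Hc Hfd; field.
      by rewrite Hd eps0.
    exists 0, q; split; first exact: sosP0.
    by split; [exact: Phi_sosP | rewrite add0r].
  + case: ifP => He; first exact: fromsq.
    case => [|Hx]; first exact: fromsq.
    have xlow : forall i, (i < v)%N -> coef x i = 0.
      move=> i hi.
      case: Hx => [[H0|[m [Hm [_ [Hvm _]]]]]|[H0|[m [Hm [_ [Hvm _]]]]]]; try exact: H0.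
        by apply: (proj2 Hm); apply: leq_trans hi Hvm.
      by apply: (proj2 Hm); apply: ltn_trans Hvm.
    have Hem : eps = -1 by case: Heps => // h; rewrite h eqxx in He.
    have Hg : isv (f + f + f + f) v.
      split.
        have -> : coef (f + f + f + f) v = coef f v * 4%:R by rewrite !coefD; ring.
        by rewrite mulf_neq0 ?(proj1 Hf) ?natr_neq0.
      by move=> i hi; rewrite !coefD (proj2 Hf) // !addr0.
    have [y Hy] := div_ex Hg xlow.
    have Hnf : PhiP (@is_square F) 0 (- f).
      right; exists v; split.
        split; first by rewrite coefN oppr_eq0 (proj1 Hf).
        by move=> i hi; rewrite coefN (proj2 Hf) // oppr0.
      split; first by rewrite Hvo.
      by split => //; exists d; rewrite coefN Hfd Hem; ring.
    have [e He'] := sq_of_Phi Hnf.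
    have Hfe : f = - (e * e) by rewrite -He' opprK.
    exists (((y - 1) * e) * ((y - 1) * e)), ((y + 1) * (y + 1)).
    split; first exact: sosP_sq.
    split; first exact: sosP_sq.
    rewrite Hy Hfe; ring.
Qed.

End Main.

Lemma sos_iff (s : pser F) : sos s <-> sosP (Ps s).
Proof.
split.
  move=> [l Hl]; exists (map (@Ps) l); apply: ps_ext => n.
  by rewrite coef_sum big_map /= Hl.
move=> [l Hl]; exists (map coef l) => n; rewrite big_map.
by have := congr1 (fun a => coef a n) Hl; rewrite coef_sum.
Qed.

Lemma PO_iff (f x : pser F) : PO f x <->
  exists s0 s1, sosP s0 /\ sosP s1 /\ Ps x = s0 + s1 * Ps f.
Proof.
split.
  move=> [s0 [s1 [H0 [H1 H]]]]; exists (Ps s0), (Ps s1).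
  split; first by apply/sos_iff.
  split; first by apply/sos_iff.
  by apply: ps_ext => n; rewrite /= H.
move=> [s0 [s1 [H0 [H1 H]]]]; exists (coef s0), (coef s1).
split; first by apply/sos_iff; case: s0 H0 {H}.
split; first by apply/sos_iff; case: s1 H1 {H}.
by move=> n; have := congr1 (fun a => coef a n) H.
Qed.

End PS.

Theorem mainTheorem15 (F : fieldType) (HF : euclidean_field F)
  (f : pser F) (v : nat) (eps : F)
  (Hv : is_val f v) (Heps : is_sign (f v) eps) :
  (forall x : pser F,
     PO f x <->
     (if odd v then Phi (@is_square F) 0 x \/ Phi (epsF2 eps) v x
      else if eps == 1 then Phi (@is_square F) 0 x
      else Phi (@is_square F) 0 x \/ Phi (fun _ => True) v x
           \/ Phi (fun _ => True) v.+1 x))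
  /\
  (forall x : pser F,
     PO f x <->
     (if ~~ odd v && (eps == 1) then PO (pser_one F) x
      else PO (pser_monomial eps v) x)).
Proof.
have P1 : forall (g : pser F) w e, is_val g w -> is_sign (g w) e -> forall x, PO g x <-> RHS w e x.
  move=> g w e Hg Hs x; rewrite PO_iff; exact: (part1 HF (f := Ps g) Hg Hs (Ps x)).
split; first exact: P1.
have [Heps' _] := sign_dec (proj1 Hv) Heps.
move=> x; rewrite (P1 f v eps Hv Heps x).
case: ifP => H.
- case/andP: H => Ho He; rewrite (P1 (pser_one F) 0%N 1).
  + by rewrite /RHS (negbTE Ho) He /= eqxx.
  + by split => //; rewrite /pser_one /= oner_neq0.
  + by left; split => //; exists 1; rewrite expr1n.
- rewrite (P1 (pser_monomial eps v) v eps) //.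
  + split; first by rewrite /pser_monomial eqxx; case: Heps' => ->; rewrite ?oppr_eq0 oner_neq0.
    by move=> i hi; rewrite /pser_monomial ifF //; apply/negbTE; rewrite neq_ltn hi.
  + rewrite /pser_monomial eqxx; case: Heps' => ->; [left|right]; split => //; exists 1;
      by rewrite ?opprK expr1n.
Qed.
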